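(* Let $L$ be a finite-dimensional Lie algebra over a field $F$. If $L$ has a supersolvable maximal subalgebra $M$ with $\eta(L:M)=1$ and $N(L)\not\subseteq M$, then $L$ is supersolvable.
   Context: $N(L)$ denotes the nilradical of $L$ (its largest nilpotent ideal). A Lie algebra is supersolvable if it has a chain of ideals $0=L_0\subset L_1\subset\cdots\subset L_n$ equal to the whole algebra, with successive quotients one-dimensional. For a nonzero subalgebra $X$ of $L$, the strict core $k(X)$ is the sum of all ideals of $L$ that are proper subalgebras of $X$ (it is $0$ if there are none). For a maximal subalgebra $M$, a subalgebra $C$ is a completion of $M$ if $C\not\subseteq M$ but every proper subalgebra of $C$ that is an ideal of $L$ is contained in $M$; an ideal completion is a completion that is an ideal of $L$. The ideal index $\eta(L:M)$ is $\dim(C/k(C))$ for any ideal completion $C$ of $M$ (independent of the choice of $C$). *)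

(* Defs.v *)
(* Finite-dimensional Lie algebras over a field F are modelled
   as a vectType F (finite-dimensional F-vector space) together with a bracket
   satisfying the Lie algebra axioms (see [is_lie_bracket]). *)
From HB Require Import structures.
From mathcomp Require Import all_boot all_order all_algebra.
Set Implicit Arguments. Unset Strict Implicit. Unset Printing Implicit Defensive.
Import GRing.Theory.
Local Open Scope ring_scope.
Local Open Scope vspace_scope.

Section Lie.
Variables (F : fieldType) (L : vectType F) (br : L -> L -> L).

Definition is_lie_bracket : Prop :=
  [/\ (forall (a : F) (x y z : L), (br (a *: x + y) z = a *: br x z + br y z)%R),
      (forall (a : F) (x y z : L), (br z (a *: x + y) = a *: br z x + br z y)%R),
      (forall x : L, br x x = 0%R)
    & (forall x y z : L, (br x (br y z) + br y (br z x) + br z (br x y) = 0)%R)].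

(* [U, V] : the subspace spanned by all brackets [u, v], u in U, v in V
   (by bilinearity it is spanned by brackets of basis vectors). *)
Definition lie_prod (U V : {vspace L}) : {vspace L} :=
  << [seq br u v | u <- (vbasis U : seq L), v <- (vbasis V : seq L)] >>%VS.

Definition is_subalgebra (U : {vspace L}) : Prop :=
  forall u v, u \in U -> v \in U -> br u v \in U.

Definition is_ideal_in (S I : {vspace L}) : Prop :=
  (I <= S)%VS /\ forall x u, x \in S -> u \in I -> br x u \in I.

Definition is_ideal (I : {vspace L}) : Prop := is_ideal_in fullv I.

(* lower central series of U: U^1 = U, U^(k+1) = [U, U^k] *)
Fixpoint lcs (U : {vspace L}) (k : nat) : {vspace L} :=
  match k with
  | 0 => U
  | k'.+1 => lie_prod U (lcs U k')
  end.

Definition is_nilpotent (U : {vspace L}) : Prop := exists k, lcs U k = 0%VS.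

Definition is_nilradical (N : {vspace L}) : Prop :=
  [/\ is_ideal N, is_nilpotent N &
      forall I, is_ideal I -> is_nilpotent I -> (I <= N)%VS].

Definition supersolvable_sub (S : {vspace L}) : Prop :=
  exists (n : nat) (f : nat -> {vspace L}),
    [/\ f 0%N = 0%VS, f n = S,
        forall i, (i <= n)%N -> is_ideal_in S (f i)
      & forall i, (i < n)%N ->
          (f i <= f i.+1)%VS /\ \dim (f i.+1) = (\dim (f i)).+1].

Definition supersolvable : Prop := supersolvable_sub fullv.

Definition is_maximal_subalgebra (M : {vspace L}) : Prop :=
  [/\ is_subalgebra M, M != fullv &
      forall U, is_subalgebra U -> (M <= U)%VS -> U = M \/ U = fullv].

(* K = k(X): the sum of all ideals of L that are proper subalgebras of X,
   characterised as the least subspace containing all of them (0 if none). *)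
Definition is_strict_core (X K : {vspace L}) : Prop :=
  (forall I, is_ideal I -> (I <= X)%VS -> I != X -> (I <= K)%VS) /\
  (forall V : {vspace L},
     (forall I, is_ideal I -> (I <= X)%VS -> I != X -> (I <= V)%VS) ->
     (K <= V)%VS).

Definition is_completion (M C : {vspace L}) : Prop :=
  [/\ is_subalgebra C, ~~ (C <= M)%VS &
      forall I, is_subalgebra I -> (I <= C)%VS -> I != C -> is_ideal I ->
        (I <= M)%VS].

Definition is_ideal_completion (M C : {vspace L}) : Prop :=
  is_completion M C /\ is_ideal C.

(* eta(L:M) = dim (C / k(C)) for an ideal completion C of M
   (independent of C); k(C) <= C, so dim (C/k(C)) = dim C - dim k(C). *)
Definition ideal_index_is (M : {vspace L}) (e : nat) : Prop :=
  exists C K, [/\ is_ideal_completion M C, is_strict_core C K &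
                  (\dim C - \dim K)%N = e].

End Lie.

(* Main.v *)
From HB Require Import structures.
From mathcomp Require Import all_boot all_order all_algebra.
Require Import Defs.
From Stdlib Require Import Classical.
From mathcomp Require Import zify.
Set Implicit Arguments. Unset Strict Implicit. Unset Printing Implicit Defensive.
Import GRing.Theory.
Local Open Scope vspace_scope.
Local Open Scope ring_scope.

Section S.
Variables (F : fieldType) (L : vectType F) (br : L -> L -> L).
Hypothesis hlie : is_lie_bracket br.

Definition adf (x : L) : L -> L := br x.
Definition radf (x : L) : L -> L := fun y => br y x.
Lemma adf_lin x : linear (adf x).
Proof. by case: hlie => _ h _ _ a u v; rewrite /adf h. Qed.
Lemma radf_lin x : linear (radf x).
Proof. by case: hlie => h _ _ _ a u v; rewrite /radf h. Qed.
HB.instance Definition _ x := GRing.isLinear.Build F L L *:%R (adf x) (adf_lin x).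
HB.instance Definition _ x := GRing.isLinear.Build F L L *:%R (radf x) (radf_lin x).
Definition ad x : 'End(L) := linfun (adf x).
Definition rad x : 'End(L) := linfun (radf x).
Lemma adE x y : ad x y = br x y. Proof. by rewrite lfunE. Qed.
Lemma radE x y : rad x y = br y x. Proof. by rewrite lfunE. Qed.

Lemma brDr x u v : br x (u + v) = br x u + br x v.
Proof. by rewrite -!adE linearD. Qed.
Lemma brDl x u v : br (u + v) x = br u x + br v x.
Proof. by rewrite -!radE linearD. Qed.
Lemma br0r x : br x 0 = 0.
Proof. by rewrite -adE linear0. Qed.
Lemma brNr x u : br x (- u) = - br x u.
Proof. by rewrite -!adE linearN. Qed.
Lemma brNl x u : br (- u) x = - br u x.
Proof. by rewrite -!radE linearN. Qed.
Lemma br_anti x y : br y x = - br x y.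
Proof.
case: hlie => _ _ h0 _.
have := h0 (x + y); rewrite brDl !brDr (h0 x) (h0 y) add0r addr0 => /eqP.
by rewrite addr_eq0 => /eqP ->; rewrite opprK.
Qed.
Lemma br_jac x y z : br x (br y z) = - (br y (br z x) + br z (br x y)).
Proof.
case: hlie => _ _ _ hj; apply/eqP; rewrite -addr_eq0 addrA; exact/eqP/hj.
Qed.

Lemma span_map (f : 'End(L)) (S : seq L) (W : {vspace L}) :
  (forall s, s \in S -> f s \in W) -> forall u, u \in <<S>>%VS -> f u \in W.
Proof.
move=> H u Hu; have : f u \in (f @: <<S>>)%VS by apply: memv_img.
rewrite limg_span; apply/subvP/span_subvP => y /mapP [s Hs ->]; exact: H.
Qed.

Lemma mem_lie_prod (U V : {vspace L}) u v : u \in U -> v \in V -> br u v \in lie_prod br U V.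
Proof.
move=> Hu Hv.
have H : forall b, b \in (vbasis U : seq L) -> br b v \in lie_prod br U V.
  move=> b Hb; rewrite -adE; apply: (span_map _ (S := vbasis V)); last first.
    by rewrite (span_basis (vbasisP V)).
  move=> c Hc; rewrite adE; apply: memv_span; exact: allpairs_f.
rewrite -radE; apply: (span_map _ (S := vbasis U)); last first.
  by rewrite (span_basis (vbasisP U)).
by move=> s Hs; rewrite radE; apply: H.
Qed.

Lemma lie_prod_sub (U V W : {vspace L}) :
  (forall u v, u \in U -> v \in V -> br u v \in W) -> (lie_prod br U V <= W)%VS.
Proof.
move=> H; apply/span_subvP => y /allpairsP [[u v] [Hu Hv ->]] /=.
by apply: H; apply: vbasis_mem.
Qed.

Lemma idealP (I : {vspace L}) : is_ideal br I -> forall x u, u \in I -> br x u \in I.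
Proof. by case=> _ H x u; apply: H; apply: memvf. Qed.
Lemma idealPl (I : {vspace L}) : is_ideal br I -> forall x u, u \in I -> br u x \in I.
Proof. by move=> HI x u Hu; rewrite br_anti memvN; apply: idealP. Qed.
Lemma mk_ideal (I : {vspace L}) : (forall x u, u \in I -> br x u \in I) -> is_ideal br I.
Proof. by move=> H; split; [apply: subvf | move=> x u _; apply: H]. Qed.

Lemma ideal0 : is_ideal br 0%VS.
Proof. by apply: mk_ideal => x u; rewrite memv0 => /eqP ->; rewrite br0r mem0v. Qed.

Lemma min_exists (P : {vspace L} -> Prop) T : P T ->
  exists A, P A /\ forall A', P A' -> (\dim A <= \dim A')%N.
Proof.
move: {2}(\dim T) (leqnn (\dim T)) => n; elim: n T => [|n IH] T hT PT.
  exists T; split=> // A' _; rewrite leqn0 in hT; by rewrite (eqP hT).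
case: (classic (exists A', P A' /\ (\dim A' < \dim T)%N)) => [[A' [PA' lt]]|nex].
  apply: (IH A') => //; lia.
exists T; split=> // A' PA'; rewrite leqNgt; apply/negP => lt; apply: nex; by exists A'.
Qed.


Definition chain (B Z : {vspace L}) : Prop :=
  exists (n : nat) (f : nat -> {vspace L}),
    [/\ f 0%N = B, f n = Z,
        forall i, (i <= n)%N -> is_ideal br (f i)
      & forall i, (i < n)%N ->
          (f i <= f i.+1)%VS /\ \dim (f i.+1) = (\dim (f i)).+1].

Lemma chain_refl Z : is_ideal br Z -> chain Z Z.
Proof. by move=> HZ; exists 0%N, (fun _ => Z); split. Qed.

Lemma chain_cons B D Z : is_ideal br B -> (B <= D)%VS ->
  \dim D = (\dim B).+1 -> chain D Z -> chain B Z.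
Proof.
move=> HB BD dD [n [f [f0 fn fI fS]]].
exists n.+1, (fun i => if i is k.+1 then f k else B); split => //.
  by case=> [|i] //= hi; apply: fI.
case=> [|i] /= hi; first by rewrite f0.
exact: fS.
Qed.

Lemma ideal_sub (I : {vspace L}) : is_ideal br I -> is_subalgebra br I.
Proof. by move=> HI u v _ Hv; apply: idealP. Qed.

Lemma sub_addI (M X : {vspace L}) : is_subalgebra br M -> is_ideal br X ->
  is_subalgebra br (M + X)%VS.
Proof.
move=> HM HX u v /memv_addP [a Ha [c Hc ->]] /memv_addP [a' Ha' [c' Hc' ->]].
rewrite brDl brDr -addrA; apply: memv_add; first exact: HM.
by apply: memvD; [apply: idealP | apply: idealPl].
Qed.

Lemma M_plus_full (M X : {vspace L}) : is_maximal_subalgebra br M ->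
  is_ideal br X -> ~~ (X <= M)%VS -> (M + X)%VS = fullv.
Proof.
case=> HM _ Hmax HX XM.
case: (Hmax (M + X)%VS (sub_addI HM HX) (addvSl _ _)) => // E.
by move: XM; rewrite -E addvSr.
Qed.


Section Step.
Variables (M N : {vspace L}) (m : nat) (Mc : nat -> {vspace L}).
Hypothesis hMsub : is_subalgebra br M.
Hypothesis hMc0 : Mc 0%N = 0%VS.
Hypothesis hMcm : Mc m = M.
Hypothesis hMcI : forall i, (i <= m)%N -> is_ideal_in br M (Mc i).
Hypothesis hMcS : forall i, (i < m)%N ->
          (Mc i <= Mc i.+1)%VS /\ \dim (Mc i.+1) = (\dim (Mc i)).+1.
Hypothesis hNI : is_ideal br N.
Hypothesis hNnil : is_nilpotent br N.
Hypothesis hLMN : forall x, exists2 a, a \in M & exists2 b, b \in N & x = a + b.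

Lemma nil_triv (A B : {vspace L}) : is_ideal br B ->
  (A <= lie_prod br N A + B)%VS -> (lie_prod br N A <= B)%VS.
Proof.
move=> HB HA.
have key : forall k, (lie_prod br N A <= lcs br N k + B)%VS.
  elim=> [|k IH].
    apply: (subv_trans _ (addvSl _ _)); apply: lie_prod_sub => u v Hu _.
    by apply: idealPl.
  apply: lie_prod_sub => // n a Hn Ha.
  have : a \in (lcs br N k + B)%VS.
    have H2 : (lie_prod br N A + B <= lcs br N k + B)%VS by rewrite subv_add IH addvSr.
    by move/subvP: (subv_trans HA H2); apply.
  case/memv_addP => p Hp [b Hb ->].
  rewrite brDr //; apply: memv_add; last by apply: idealP.
  by apply: mem_lie_prod.
case: hNnil => k Hk; have := key k; by rewrite Hk add0v.
Qed.

Lemma dim_step (U U' A B : {vspace L}) : (U <= U')%VS ->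
  \dim U' = (\dim U).+1 ->
  (\dim ((U' :&: A) + B)%VS <= (\dim ((U :&: A) + B)%VS).+1)%N.
Proof.
move=> HU HdU.
set a := (U :&: A)%VS; set a' := (U' :&: A)%VS; set X := (a + B)%VS.
have h1 := dimv_sum_cap U a'.
have h2 : (\dim (U + a')%VS <= \dim U')%N.
  by apply: dimvS; rewrite subv_add HU capvSl.
have h3 : (\dim (U :&: a')%VS <= \dim a)%N.
  by apply: dimvS; apply: capvS => //; apply: capvSr.
have h4 := dimv_sum_cap a' X.
have h5 : (\dim (a' + B)%VS <= \dim (a' + X)%VS)%N.
  by apply: dimvS; apply: addvS => //; apply: addvSr.
have h6 : (\dim a <= \dim (a' :&: X)%VS)%N.
  apply: dimvS; rewrite subv_cap; apply/andP; split; last exact: addvSl.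
  by apply: capvS.
lia.
Qed.

Lemma step (B T : {vspace L}) : is_ideal br B -> is_ideal br T ->
  (B <= T)%VS -> B != T -> (T <= M + B)%VS ->
  exists D, [/\ is_ideal br D, (B <= D)%VS, (D <= T)%VS &
                \dim D = (\dim B).+1].
Proof.
move=> HB HT BT BneT TMB.
have BneT' : T != B by rewrite eq_sym.
have [A [[HA BA AneB AT] Amin]] := min_exists
  (P := fun A : {vspace L} => [/\ is_ideal br A, (B <= A)%VS, A != B & (A <= T)%VS])
  (And4 HT BT BneT' (subvv T)).
have hNAA : (lie_prod br N A <= A)%VS.
  by apply: lie_prod_sub => u v _ Hv; apply: idealP.
have hNA : (lie_prod br N A <= B)%VS.
  pose X := (lie_prod br N A + B)%VS.
  have HX : is_ideal br X.
    apply: mk_ideal => x y /memv_addP [p Hp [b Hb ->]].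
    rewrite /X brDr; apply: memv_add; last by apply: idealP.
    have : p \in lie_prod br N A := Hp.
    suff Hs : (ad x p \in lie_prod br N A) by rewrite -adE.
    apply: (span_map (S := [seq br u v | u <- (vbasis N : seq L), v <- (vbasis A : seq L)])) Hp => g /allpairsP [[u v] [Hu Hv ->]] /=.
    rewrite adE br_jac memvN; apply: memvD.
      apply: mem_lie_prod; first exact: vbasis_mem Hu.
      by apply: idealPl => //; apply: vbasis_mem Hv.
    rewrite br_anti memvN; apply: mem_lie_prod; last exact: vbasis_mem Hv.
    by apply: idealP => //; apply: vbasis_mem Hu.
  have XA : (X <= A)%VS by rewrite subv_add hNAA BA.
  case: (eqVneq X B) => [XB | XneB].
    by rewrite -XB addvSl.
  have dimle := Amin X (And4 HX (addvSr _ _) XneB (subv_trans XA AT)).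
  have XeqA : X = A by apply/eqP; rewrite eqEdim XA dimle.
  by apply: nil_triv HB _; rewrite -/X XeqA subvv.
pose Xi i := ((Mc i :&: A) + B)%VS.
have XiI : forall i, (i <= m)%N -> is_ideal br (Xi i).
  move=> i hi; apply: mk_ideal => x y /memv_addP [w Hw [b Hb ->]].
  case: (hLMN x) => a0 Ha0 [n0 Hn0 ->].
  move/memv_capP: Hw => [Hw1 Hw2].
  rewrite brDr brDl -addrA; apply: memv_add.
    rewrite memv_cap; apply/andP; split; last by apply: idealP.
    by case: (hMcI hi) => _; apply.
  apply: memvD; last by apply: idealP.
  by apply: (subvP hNA); apply: mem_lie_prod.
have Xi0 : Xi 0%N = B by rewrite /Xi hMc0 cap0v add0v.
have Xim : Xi m = A.
  rewrite /Xi hMcm; apply: subv_anti; apply/andP; split.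
    by rewrite subv_add BA capvSr.
  apply/subvP => a Ha.
  have : a \in (M + B)%VS by apply: (subvP (subv_trans AT TMB)).
  case/memv_addP => u Hu [b Hb Ea]; rewrite Ea; apply: memv_add => //.
  rewrite memv_cap Hu /=; have -> : u = a - b by rewrite Ea addrK.
  by rewrite memvB //; apply: (subvP BA).
have BXi : forall i, (B <= Xi i)%VS by move=> i; apply: addvSr.
have XiA : forall i, (Xi i <= A)%VS by move=> i; rewrite subv_add capvSr BA.
have exP : exists i, (i <= m)%N && (Xi i != B) by exists m; rewrite leqnn Xim AneB.
case: (ex_minnP exP) => j /andP [jm XjB] jmin.
case: j jm XjB jmin => [|i] jm XjB jmin; first by rewrite Xi0 eqxx in XjB.
have XiB : Xi i = B.
  apply/eqP; apply/negPn/negP => ne; have := jmin i; rewrite (ltnW jm) ne.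
  by move=> /(_ isT); rewrite ltnn.
exists (Xi i.+1); split.
- exact: XiI.
- exact: BXi.
- exact: subv_trans (XiA _) AT.
have le : (\dim (Xi i.+1) <= (\dim B).+1)%N.
  by rewrite -XiB; apply: dim_step; case: (hMcS jm).
have : B != Xi i.+1 by rewrite eq_sym.
rewrite eqEdim BXi /= -ltnNge => gt; lia.
Qed.
Lemma chain_build (T Z : {vspace L}) : is_ideal br T -> chain T Z ->
  forall B, is_ideal br B -> (B <= T)%VS -> (T <= M + B)%VS -> chain B Z.
Proof.
move=> HT HTZ B.
move: {2}(\dim T - \dim B)%N (leqnn (\dim T - \dim B)%N) => k.
elim: k B => [|k IH] B hk HB BT TMB.
  have : B = T.
    apply/eqP; rewrite eqEdim BT /=; lia.
  by move=> ->.
case: (eqVneq B T) => [-> //|BneT].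
have [D [HD BD DT dD]] := step HB HT BT BneT TMB.
apply: (chain_cons HB BD dD); apply: IH => //.
- have := dimvS DT; lia.
- by apply: (subv_trans TMB); apply: addvS.
Qed.

Lemma final_chain (C K : {vspace L}) : is_ideal br C -> is_ideal br K ->
  (K <= C)%VS -> \dim C = (\dim K).+1 -> (K <= M)%VS -> (M + C)%VS = fullv ->
  chain 0%VS fullv.
Proof.
move=> HC HK KC dC KM MC.
have Hf : is_ideal br fullv by apply: mk_ideal => x u _; apply: memvf.
have h1 : chain C fullv.
  apply: (chain_build Hf (chain_refl Hf)) => //; first exact: subvf.
  by rewrite MC.
have h2 : chain K fullv by apply: (chain_cons HK KC dC h1).
apply: (chain_build HK h2); [exact: ideal0 | exact: sub0v | by rewrite addv0].
Qed.
End Step.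
End S.



Local Open Scope vspace_scope.
Theorem theorem2p9 (F : fieldType) (L : vectType F) (br : L -> L -> L)
    (hlie : is_lie_bracket br)
    (M : {vspace L}) (hM : is_maximal_subalgebra br M)
    (hMss : supersolvable_sub br M)
    (heta : ideal_index_is br M 1)
    (N : {vspace L}) (hN : is_nilradical br N)
    (hNM : ~~ (N <= M)%VS) :
  supersolvable br.
Proof.
case: hMss => m [Mc [hMc0 hMcm hMcI hMcS]].
have hM' := hM; case: hM' => hMsub hMneq hMmax.
case: heta => C [K [[[hCsub hCM hCprop] hCI] [hK1 hK2] hdim]].
case: hN => hNI hNnil _.
have hLMN : forall x, exists2 a, a \in M & exists2 b, b \in N & x = (a + b)%R.
  move=> x; apply/memv_addP; rewrite (M_plus_full hlie hM hNI hNM); exact: memvf.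
have KC : (K <= C)%VS by apply: hK2 => I _ IC _.
have KM : (K <= M)%VS.
  apply: hK2 => I HI IC Ine; apply: hCprop => //; exact: ideal_sub HI.
have KI : is_ideal br K.
  apply: mk_ideal => x u Hu.
  have KV : (K <= K :&: (ad br x @^-1: K))%VS.
    apply: hK2 => I HI IC Ine; rewrite subv_cap (hK1 I HI IC Ine) /=.
    apply/subvP => y Hy; rewrite -memv_preim (adE hlie).
    by apply: (subvP (hK1 I HI IC Ine)); apply: idealP.
  by have := subvP KV u Hu; rewrite memv_cap -memv_preim (adE hlie) => /andP [_ ->].
have dC : \dim C = (\dim K).+1.
  have := dimvS KC; move: hdim; lia.
exact: (final_chain hlie hMc0 hMcm hMcI hMcS hNI hNnil hLMN hCI KI KC dC KM
         (M_plus_full hlie hM hCI hCM)).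
Qed.
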